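(* Let $p,q\ge0$ be integers and $\alpha=(\alpha_1,\dots,\alpha_p)$, $\beta=(\beta_1,\dots,\beta_q)$ with all $\alpha_i>0,\beta_j>0$. Let ${}_p\rho_q(n)=n!\,\frac{(\beta_1)_n\cdots(\beta_q)_n}{(\alpha_1)_n\cdots(\alpha_p)_n}$, ${}_pF_q(\alpha,\beta;x)=\sum_{n\ge0}\frac{x^n}{{}_p\rho_q(n)}$, and for $w$ with $|w|^2$ strictly inside the disc of convergence let $|w;\alpha,\beta\rangle={}_pF_q(\alpha,\beta;|w|^2)^{-1/2}\sum_{n\ge0}\frac{w^n}{\sqrt{{}_p\rho_q(n)}}|n\rangle$ in the Hilbert space with orthonormal basis $\{|n\rangle\}_{n\ge0}$, where $\hat n|n\rangle=n|n\rangle$. Let $\Omega>0$, $\tau=2\pi/\Omega$, $k\ge1$ an integer, and $z$ with $|z|^2$ strictly inside the disc of convergence. Then $$e^{-i\Omega(\tau/k)\hat n^2}|z;\alpha,\beta\rangle=\frac1k\sum_{j=0}^{k-1}\sum_{l=0}^{k-1}e^{-2\pi i j(j+l)/k}\,|ze^{2\pi i l/k};\alpha,\beta\rangle .$$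
   Context: $(a)_n=a(a+1)\cdots(a+n-1)$, $(a)_0=1$, is the Pochhammer symbol. The series ${}_pF_q$ converges for all $x$ if $p\le q$ and for $|x|<1$ if $p=q+1$. The operator $e^{-i\Omega t\hat n^2}$ acts by $|n\rangle\mapsto e^{-i\Omega t n^2}|n\rangle$. *)

(* Defs.v *)
From HB Require Import structures.
From mathcomp Require Import all_boot all_order all_algebra.
From mathcomp Require Import all_classical all_reals all_analysis.
From mathcomp Require Import complex.
Set Implicit Arguments. Unset Strict Implicit. Unset Printing Implicit Defensive.
Import Order.TTheory GRing.Theory Num.Theory numFieldNormedType.Exports.
Local Open Scope ring_scope.
Local Open Scope complex_scope.

Section Defs.
Variable R : realType.

Definition pochhammer (a : R) (n : nat) : R := \prod_(i < n) (a + i%:R).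

Definition prho (p q : nat) (al : 'I_p -> R) (be : 'I_q -> R) (n : nat) : R :=
  (n`!)%:R * (\prod_(j < q) pochhammer (be j) n) / (\prod_(i < p) pochhammer (al i) n).

Definition pFq (p q : nat) (al : 'I_p -> R) (be : 'I_q -> R) (x : R) : R :=
  limn (series (fun n => x ^+ n / prho al be n)).

Definition in_conv_disc (p q : nat) (al : 'I_p -> R) (be : 'I_q -> R) (x : R) : Prop :=
  exists r : R, `|x| < r /\ cvgn (series (fun n => r ^+ n / prho al be n)).

Definition sqmod (w : R[i]) : R := let: a +i* b := w in a ^+ 2 + b ^+ 2.

Definition expi (t : R) : R[i] := cos t +i* sin t.

(* Vectors of the Hilbert space with orthonormal basis {|n>}_{n≥0} are
   represented by their coefficient sequences (v n = <n|v>). *)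

Definition coh (p q : nat) (al : 'I_p -> R) (be : 'I_q -> R) (w : R[i]) : nat -> R[i] :=
  fun n => ((Num.sqrt (pFq al be (sqmod w)))^-1)%:C * w ^+ n
           * ((Num.sqrt (prho al be n))^-1)%:C.

Definition evolve (Om t : R) (v : nat -> R[i]) : nat -> R[i] :=
  fun n => expi (- (Om * t * (n%:R ^+ 2))) * v n.

End Defs.

(* Main.v *)
Require Import Defs.
From HB Require Import structures.
From mathcomp Require Import all_boot all_order all_algebra.
From mathcomp Require Import all_classical all_reals all_analysis.
From mathcomp Require Import complex ring lra zify.
Import Order.TTheory GRing.Theory Num.Theory numFieldNormedType.Exports.
Local Open Scope ring_scope.
Local Open Scope complex_scope.

Section S.
Variable R : realType.

Lemma expiD (a b : R) : expi a * expi b = expi (a + b).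
Proof. rewrite /expi cosD sinD /=. congr (_ +i* _); ring. Qed.

Lemma expi0 : expi (0:R) = 1.
Proof. by rewrite /expi cos0 sin0. Qed.

Lemma expiMn (a : R) n : expi (n%:R * a) = expi a ^+ n.
Proof.
elim: n => [|n IH]; first by rewrite mul0r expi0.
by rewrite exprS -IH expiD -natr1 mulrDl mul1r addrC.
Qed.

Lemma expi2pi : expi (2 * pi : R) = 1.
Proof. by rewrite /expi mulr_natl cos2pi sin2pi. Qed.

Lemma sqmod_expi (z : R[i]) t : sqmod (z * expi t) = sqmod z.
Proof.
case: z => a b; rewrite /expi /sqmod /=.
have h := cos2Dsin2 t.
transitivity ((a^+2 + b^+2) * (cos t ^+ 2 + sin t ^+ 2)); first ring.
by rewrite h mulr1.
Qed.

Lemma expi_neq1 (x : R) : 0 < x < 2 * pi -> expi x != 1.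
Proof.
move=> /andP[h0 h1]; apply/negP => /eqP/(congr1 (@complex.Re R)) /= hc.
have hs : 0 < sin (x / 2).
  apply: sin_gt0_pi; apply/andP; split; lra.
have : cos x = 1 - 2 * sin (x/2) ^+ 2.
  have hx : x = x/2 + x/2 by field.
  rewrite [in LHS]hx cosD.
  have := cos2Dsin2 (x/2). lra.
move=> e. rewrite /expi /= in hc; rewrite hc in e. have : sin (x/2) ^+ 2 = 0 by lra.
by move/eqP; rewrite sqrf_eq0 (gt_eqF hs).
Qed.

Lemma pow_mod (w : R[i]) k a : w ^+ k = 1 -> w ^+ a = w ^+ (a %% k).
Proof. by move=> h; rewrite {1}(divn_eq a k) exprD mulnC exprM h expr1n mul1r. Qed.

Lemma sum_roots (w : R[i]) k m : (0 < k)%N -> w ^+ k = 1 ->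
  (forall a, (0 < a < k)%N -> w ^+ a != 1) ->
  \sum_(l < k) w ^+ (l * m) = if (k %| m)%N then k%:R else 0.
Proof.
move=> hk hw hne.
under eq_bigr => l _ do rewrite mulnC exprM.
have uk : (w ^+ m) ^+ k = 1 by rewrite -exprM mulnC exprM hw expr1n.
case: ifP => hd.
  rewrite (pow_mod _ _ m hw) (eqP hd) expr0.
  by rewrite (eq_bigr (fun _ => 1)) ?sumr_const ?card_ord // => i _; rewrite expr1n.
have hu : w ^+ m != 1.
  rewrite (pow_mod _ _ m hw); apply: hne; rewrite ltn_pmod // andbT lt0n.
  by apply/negP => /eqP h0; move/negbT: hd; rewrite /dvdn h0.
have := subrX1 (w ^+ m) k; rewrite uk subrr => /esym/eqP.
by rewrite mulf_eq0 subr_eq0 (negbTE hu) /= => /eqP.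
Qed.

Lemma dvd_iff k n j : (0 < k)%N -> (j < k)%N ->
  (k %| n + (k - 1) * j)%N = (j == n %% k)%N.
Proof.
move=> hk hj.
have e : (n + (k - 1) * j + j = n + k * j)%N.
  case: k hk hj => [//|k] _ _; rewrite subn1 /= mulSn; lia.
apply/idP/eqP.
  case/dvdnP => t ht.
  have := modnMDl t j k; rewrite -ht e (modn_small hj) addnC (mulnC k j) modnMDl => ->.
  done.
move=> ->; clear e.
rewrite {1}(divn_eq n k) -addnA.
have -> : (n %% k + (k - 1) * (n %% k) = k * (n %% k))%N.
  case: k hk hj => [//|k] _ _; rewrite subn1 /= mulSn; lia.
by apply: dvdn_add; [apply: dvdn_mull | apply: dvdn_mulr].
Qed.

End S.

Theorem mainTheorem4 (R : realType) (p q : nat) (al : 'I_p -> R) (be : 'I_q -> R)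
  (hal : forall i, 0 < al i) (hbe : forall j, 0 < be j)
  (Om : R) (hOm : 0 < Om) (k : nat) (hk : (1 <= k)%N)
  (z : R[i]) (hz : in_conv_disc al be (sqmod z)) :
  let tau := 2 * pi / Om in
  evolve Om (tau / k%:R) (coh al be z) =
  (fun n => (k%:R^-1)%:C *
     \sum_(j < k) \sum_(l < k)
        expi (- (2 * pi * j%:R * (j%:R + l%:R) / k%:R))
        * coh al be (z * expi (2 * pi * l%:R / k%:R)) n).
Proof.
move=> tau; apply: funext => n.
have kR0 : (k%:R : R) != 0 by rewrite pnatr_eq0 -lt0n.
have Om0 : Om != 0 by rewrite gt_eqF.
pose w := expi (2 * pi / k%:R : R).
pose u := expi (- (2 * pi / k%:R) : R).
have wk : w ^+ k = 1.
  by rewrite /w -expiMn mulrC divfK // expi2pi.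
have uw : u * w = 1 by rewrite /u /w expiD addNr expi0.
have uE : u = w ^+ (k - 1).
  rewrite -[u]mulr1 -wk.
  have -> : w ^+ k = w ^+ (k-1) * w by rewrite -exprSr subn1 prednK.
  by rewrite mulrA [u * _]mulrC -mulrA uw mulr1.
have wne : forall a, (0 < a < k)%N -> w ^+ a != 1.
  move=> a /andP[a0 ak]; rewrite /w -expiMn; apply: expi_neq1.
  have k0 : (0 : R) < k%:R by rewrite ltr0n.
  have a0' : (0 : R) < a%:R by rewrite ltr0n.
  have ak' : (a%:R : R) < k%:R by rewrite ltr_nat.
  have pi0 := pi_gt0 R.
  apply/andP; split.
    by apply: mulr_gt0 => //; apply: divr_gt0 => //; apply: mulr_gt0.
  have h1 : a%:R / k%:R < 1 :> R by rewrite ltr_pdivrMr // mul1r.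
  have -> : a%:R * (2 * pi / k%:R) = 2 * pi * (a%:R / k%:R) :> R by field.
  nra.
set X := ((Num.sqrt (pFq al be (sqmod z)))^-1)%:C * z ^+ n
           * ((Num.sqrt (prho al be n))^-1)%:C.
have cohE : forall l : nat, coh al be (z * expi (2 * pi * l%:R / k%:R)) n = X * w ^+ (l * n).
  move=> l; rewrite /coh sqmod_expi /X.
  have -> : expi (2 * pi * l%:R / k%:R) = w ^+ l.
    by rewrite /w -expiMn; congr expi; rewrite mulrA [_ * l%:R]mulrC.
  by rewrite exprMn -exprM; ring.
have phE : forall j l : nat, expi (- (2 * pi * j%:R * (j%:R + l%:R) / k%:R))
     = u ^+ (j * (j + l)).
  move=> j l; rewrite /u -expiMn; congr expi; rewrite natrM natrD; ring.
rewrite /evolve.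
have -> : expi (- (Om * (tau / k%:R) * n%:R ^+ 2)) = u ^+ (n * n).
  rewrite /u -expiMn /tau natrM; congr expi; field.
  by rewrite kR0 Om0.
have cohz : coh al be z n = X by [].
rewrite cohz.
have k0 : (0 < k)%N by [].
have termE : forall j l : nat,
    expi (- (2 * pi * j%:R * (j%:R + l%:R) / k%:R))
    * coh al be (z * expi (2 * pi * l%:R / k%:R)) n
    = X * w ^+ ((k - 1) * (j * j)) * w ^+ (l * (n + (k - 1) * j)).
  move=> j l; rewrite phE cohE uE -!exprM.
  have e : ((k-1)*(j*(j+l)) + l*n = (k-1)*(j*j) + l*(n+(k-1)*j))%N by ring.
  by rewrite -mulrA -exprD -e exprD mulrCA.
under eq_bigr => j _ do under eq_bigr => l _ do rewrite termE.
under eq_bigr => j _ do rewrite -mulr_sumr sum_roots // dvd_iff //.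
pose r := Ordinal (ltn_pmod n k0).
rewrite (bigD1 r) //= big1; last first.
  by move=> j /negbTE hj; rewrite -(inj_eq val_inj) /= in hj; rewrite hj mulr0.
rewrite eqxx addr0.
have -> : u ^+ (n * n) = w ^+ ((k - 1) * (n %% k * (n %% k))).
  rewrite uE -exprM (pow_mod _ _ _ _ wk) [in RHS](pow_mod _ _ _ _ wk); congr (w ^+ _).
  by rewrite -[in RHS]modnMmr modnMm modnMmr.
have kC : (k%:R^-1 : R)%:C * (k%:R : R[i]) = 1.
  by rewrite -(rmorph_nat (@real_complex R)) -rmorphM mulVf // rmorph1.
transitivity (X * w ^+ ((k - 1) * (n %% k * (n %% k))) * ((k%:R^-1 : R)%:C * (k%:R : R[i]))).
  by rewrite kC mulr1 mulrC.
ring.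
Qed.
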